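(* Let $(V_o,w_o,\mu_o)$ be a simple weighted graph with adapted weight $\sigma_o$ and adapted path metric $d_{\sigma_o}$. Let $(V,w,\mu)$ be its modified graph with weight $\mathfrak n$, with adapted weight $\sigma$ and adapted path metric $d_\sigma$. Then: (1) $d_\sigma|_{V_o\times V_o}=d_{\sigma_o}$; (2) for every $x_0\in V_o$ and $r>0$, \[\mu_o\big(B_{d_{\sigma_o}}(x_0,r)\big)\le\mu\big(B_{d_\sigma}(x_0,r)\big)\le3\,\mu_o\big(B_{d_{\sigma_o}}(x_0,r)\big),\] where $B_{d_{\sigma_o}}(x_0,r)$ is a ball in $V_o$ and $B_{d_\sigma}(x_0,r)$ is a ball in $V$.
   Context: **Weighted graphs.** A simple weighted graph $(V,w,\mu)$ consists of a countably infinite set $V$, a symmetric function $w:V\times V\to[0,\infty)$ and a function $\mu:V\to(0,\infty)$. The graph with edges $\{x\sim y:w(x,y)>0\}$ is assumed to be locally finite, connected, and without loops or multiple edges. **Adapted weights and metrics.** An adapted weight is a symmetric $\sigma:E\to(0,1]$ with $\frac1{\mu(x)}\sum_y w(x,y)\sigma(x,y)^2\le1$ for all $x$. The adapted path metric $d_\sigma(x,y)$ is the infimum of $\sum_i\sigma(x_i,x_{i+1})$ over paths $x=x_0\sim\cdots\sim x_n=y$. Closed balls are $B_d(x,r)=\{y:d(x,y)\le r\}$. **Modified graph.** Fix an orientation $E_o^+$ of $E_o$, and let $\mathfrak n:E_o\to\mathbb N_+$ be symmetric with $\mathfrak n\ge2$. For $e=(x,y)\in E_o^+$, add distinct new vertices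 $x^e_1,\dots,x^e_{\mathfrak n(e)-1}$, set $x_0^e=x$, $x^e_{\mathfrak n(e)}=y$, and replace the edge $x\sim y$ by the path $x^e_0\sim\cdots\sim x^e_{\mathfrak n(e)}$. Weights and measure: - $w(x^e_i,x^e_{i+1})=\mathfrak n(e)w_o(e)$, symmetric, and $w=0$ otherwise; - $\mu=\mu_o$ on $V_o$, and $\mu(x^e_i)=2w_o(e)\sigma_o(e)^2/\mathfrak n(e)$ for $1\le i\le\mathfrak n(e)-1$; - $\sigma(x^e_i,x^e_{i+1})=\sigma_o(e)/\mathfrak n(e)$. *)

(* Defs.v *)
From HB Require Import structures.
From mathcomp Require Import all_boot all_order all_algebra.
From mathcomp Require Import all_classical all_reals all_analysis.
Set Implicit Arguments. Unset Strict Implicit. Unset Printing Implicit Defensive.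
Import Order.TTheory GRing.Theory Num.Theory.
Local Open Scope classical_set_scope.
Local Open Scope ring_scope.

Section Defs.
Variable R : realType.

Fixpoint is_walk (T : Type) (adj : T -> T -> Prop) (x : T) (p : seq T) : Prop :=
  match p with
  | [::] => True
  | y :: q => adj x y /\ is_walk adj y q
  end.

Fixpoint walk_len (T : Type) (s : T -> T -> R) (x : T) (p : seq T) : R :=
  match p with
  | [::] => 0
  | y :: q => s x y + walk_len s y q
  end.

Definition edge (T : Type) (w : T -> T -> R) (x y : T) : Prop := 0 < w x y.

Definition path_dist (T : Type) (w s : T -> T -> R) (x y : T) : R :=
  inf [set walk_len s x p | p in [set p | is_walk (edge w) x p /\ last x p = y]].

Definition ball_d (T : Type) (d : T -> T -> R) (x : T) (r : R) : set T :=
  [set y | d x y <= r].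

Definition vmeas (T : Type) (mu : T -> R) (A : set T) : \bar R :=
  @esum R {classic T} A (fun x => (mu x)%:E).

Definition weighted_graph (T : Type) (w : T -> T -> R) (mu : T -> R) : Prop :=
  [/\ countable [set: T] /\ infinite_set [set: T],
      (forall x y, 0 <= w x y) /\ (forall x y, w x y = w y x),
      (forall x, w x x = 0) /\ (forall x, 0 < mu x),
      (forall x, finite_set [set y | edge w x y]) &
      (forall x y, exists p, is_walk (edge w) x p /\ last x p = y)].

Definition adapted (T : Type) (w : T -> T -> R) (mu : T -> R) (s : T -> T -> R) : Prop :=
  [/\ (forall x y, edge w x y -> 0 < s x y <= 1),
      (forall x y, edge w x y -> s x y = s y x) &
      (forall x, (((mu x)^-1)%:E *
          @esum R {classic T} [set y | edge w x y] (fun y => (w x y * s x y ^+ 2)%:E)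
          <= 1)%E)].

Definition orientation (T : Type) (w : T -> T -> R) (ori : T -> T -> Prop) : Prop :=
  (forall x y, ori x y -> edge w x y) /\
  (forall x y, edge w x y -> (ori x y <-> ~ ori y x)).

(** new vertices x^e_i, e = (x,y) in E^+, 1 <= i <= n(e)-1 *)
Definition newV (T : Type) (ori : T -> T -> Prop) (n : T -> T -> nat) :=
  {t : T * T * nat | ori t.1.1 t.1.2 /\ (0 < t.2 < n t.1.1 t.1.2)%N}.

Definition modV (T : Type) (ori : T -> T -> Prop) (n : T -> T -> nat) :=
  (T + newV ori n)%type.

(** generic edge-function of the modified graph: value [f x y] on each
    subdivided segment x^e_i ~ x^e_{i+1} of e = (x,y), and 0 otherwise *)
Definition mod_edgefun (T : Type) (ori : T -> T -> Prop) (n : T -> T -> nat)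
    (f : T -> T -> R) (u v : modV ori n) : R :=
  match u, v with
  | inl _, inl _ => 0
  | inl a, inr t | inr t, inl a =>
      let '(x, y, i) := sval t in
      if `[< (a = x /\ i = 1%N) \/ (a = y /\ i = (n x y).-1) >] then f x y else 0
  | inr t, inr t' =>
      let '(x, y, i) := sval t in
      let '(x', y', j) := sval t' in
      if `[< x = x' /\ y = y' /\ (j = i.+1 \/ i = j.+1) >] then f x y else 0
  end.

Definition mod_w (T : Type) (w : T -> T -> R) (ori : T -> T -> Prop)
    (n : T -> T -> nat) : modV ori n -> modV ori n -> R :=
  @mod_edgefun T ori n (fun x y => (n x y)%:R * w x y).

Definition mod_sigma (T : Type) (s : T -> T -> R) (ori : T -> T -> Prop)
    (n : T -> T -> nat) : modV ori n -> modV ori n -> R :=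
  @mod_edgefun T ori n (fun x y => s x y / (n x y)%:R).

Definition mod_mu (T : Type) (w : T -> T -> R) (mu : T -> R) (s : T -> T -> R)
    (ori : T -> T -> Prop) (n : T -> T -> nat) (u : modV ori n) : R :=
  match u with
  | inl a => mu a
  | inr t => let '(x, y, _) := sval t in 2 * w x y * s x y ^+ 2 / (n x y)%:R
  end.

End Defs.

Arguments mod_w {R T} w ori n _ _.
Arguments mod_sigma {R T} s ori n _ _.
Arguments mod_mu {R T} w mu s ori n _.

(* Main.v *)
Require Import Defs.
From HB Require Import structures.
From mathcomp Require Import all_boot all_order all_algebra.
From mathcomp Require Import all_classical all_reals all_analysis.
From mathcomp Require Import lra zify.
Import Order.TTheory GRing.Theory Num.Theory.
Local Open Scope classical_set_scope.
Local Open Scope ring_scope.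


Section Walks.
Variables (R : realType) (T : Type).
Implicit Types (adj : T -> T -> Prop) (s : T -> T -> R).

Lemma is_walk_cat adj x p q :
  is_walk adj x (p ++ q) <-> is_walk adj x p /\ is_walk adj (last x p) q.
Proof.
elim: p x => [|y p IH] x /=; first by split=> // -[].
rewrite IH; tauto.
Qed.

Lemma walk_len_cat s x p q :
  walk_len s x (p ++ q) = walk_len s x p + walk_len s (last x p) q.
Proof. by elim: p x => [|y p IH] x /=; rewrite ?add0r // IH addrA. Qed.

Lemma walk_len_ge0 adj s x p : (forall u v, adj u v -> 0 <= s u v) ->
  is_walk adj x p -> 0 <= walk_len s x p.
Proof.
move=> h; elim: p x => [|y p IH] x //= [a b].
by apply: addr_ge0; [exact: h|exact: IH].
Qed.

Lemma potential adj s (phi : T -> R) :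
  (forall u v, adj u v -> phi v <= phi u + s u v) ->
  forall x p, is_walk adj x p -> phi (last x p) <= phi x + walk_len s x p.
Proof.
move=> h x p; elim: p x => [|y p IH] x /=; first by rewrite addr0.
move=> [a b]; have := IH _ b; have := h _ _ a; lra.
Qed.

Definition wset (w : T -> T -> R) s x y :=
  [set walk_len s x p | p in [set p | is_walk (edge w) x p /\ last x p = y]].

Lemma pd_le (w : T -> T -> R) s x y p :
  (forall u v, edge w u v -> 0 <= s u v) ->
  is_walk (edge w) x p -> last x p = y -> path_dist w s x y <= walk_len s x p.
Proof.
move=> h hp hl; have : lbound (wset w s x y) (path_dist w s x y).
  apply: ge_inf; exists 0 => _ [q [hq _] <-]; exact: walk_len_ge0 hq.
by apply; exists p.
Qed.

Lemma pd_ge (w : T -> T -> R) s x y c :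
  (exists p, is_walk (edge w) x p /\ last x p = y) ->
  (forall p, is_walk (edge w) x p -> last x p = y -> c <= walk_len s x p) ->
  c <= path_dist w s x y.
Proof.
move=> [p hp] h; apply: lb_le_inf; first by exists (walk_len s x p), p.
by move=> _ [q [hq hq'] <-]; exact: h.
Qed.

Lemma pd_ge0 (w : T -> T -> R) s x y :
  (forall u v, edge w u v -> 0 <= s u v) ->
  (exists p, is_walk (edge w) x p /\ last x p = y) -> 0 <= path_dist w s x y.
Proof. by move=> h ex; apply: pd_ge => // p hp _; exact: walk_len_ge0 hp. Qed.

Lemma pd_refl (w : T -> T -> R) s x :
  (forall u v, edge w u v -> 0 <= s u v) -> path_dist w s x x = 0.
Proof.
move=> h; apply/eqP; rewrite eq_le; apply/andP; split.
  by have := @pd_le w s x x [::] h I erefl.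
by apply: pd_ge0 => //; exists [::].
Qed.

Lemma pd_tri (w : T -> T -> R) s x y z :
  (forall u v, edge w u v -> 0 <= s u v) ->
  (exists p, is_walk (edge w) x p /\ last x p = y) -> edge w y z ->
  path_dist w s x z <= path_dist w s x y + s y z.
Proof.
move=> h ex e; rewrite -lerBlDr; apply: pd_ge => // p hp hl.
rewrite lerBlDr.
have := @pd_le w s x z (p ++ [:: z]) h.
rewrite is_walk_cat walk_len_cat last_cat /= hl addr0; apply=> //.
Qed.

End Walks.

Section Chain.
Variables (R : realType) (T : Type).
Lemma chain_walk (adj : T -> T -> Prop) (s : T -> T -> R) (c : nat -> T) h m j :
  (forall k, (j <= k < j + m)%N -> adj (c k) (c k.+1) /\ s (c k) (c k.+1) = h) ->
  [/\ is_walk adj (c j) (map c (iota j.+1 m)),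
      last (c j) (map c (iota j.+1 m)) = c (j + m)%N &
      walk_len s (c j) (map c (iota j.+1 m)) = m%:R * h].
Proof.
elim: m j => [|m IH] j hc /=; first by split; rewrite ?addn0 ?mul0r.
have [a1 a2] := hc j ltac:(rewrite leqnn /= addnS ltnS leq_addr //).
have [b1 b2 b3] := IH j.+1 (fun k hk => hc k ltac:(move: hk; rewrite addSnnS; move=> /andP[/ltnW -> ->] //)).
split=> //; first by rewrite b2 addSnnS.
by rewrite b3 a2 -natr1 mulrDl mul1r addrC.
Qed.
End Chain.

Set Implicit Arguments.
Unset Strict Implicit.


Lemma esum_sub (R : realType) (U : choiceType) (A B : set U) (f : U -> \bar R) :
  A `<=` B -> (forall x, B x -> (0 <= f x)%E) -> (esum A f <= esum B f)%E.
Proof.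
move=> AB f0; apply: ge_ereal_sup => _ [X [finX XA] <-].
by apply: esum_ge; exists X => //; split => //; exact: subset_trans AB.
Qed.

Lemma esum_const_lt (R : realType) (c : R) m : 0 <= c ->
  esum [set i : nat | (i < m)%N] (fun=> c%:E) = (m%:R * c)%:E.
Proof.
move=> c0; elim: m => [|m IH].
  rewrite mul0r (_ : [set _ | _] = set0) ?esum_set0 //.
  by apply/seteqP; split => x //=.
rewrite (esumID [set m]); last by move=> *; rewrite lee_fin.
rewrite (_ : _ `&` [set m] = [set m]); last first.
  by apply/seteqP; split => x /=; [case|move=> ->; split].
rewrite (_ : _ `&` ~` _ = [set i | (i < m)%N]); last first.
  apply/seteqP; split => x /=; first by move=> [h1 h2]; move: h1 h2; rewrite ltnS leq_eqVlt => /orP[/eqP|].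
  by move=> h; split; [exact: ltnW|move=> e; move: h; rewrite e ltnn].
by rewrite esum_set1 ?lee_fin // IH -EFinD -natr1 mulrDl mul1r addrC.
Qed.


Ltac asbT tac := match goal with |- context [`[< ?P >]] =>
  let hP := fresh "hP" in assert (hP : P) by tac;
  rewrite (asboolT hP); clear hP end.

Section Mod.
Variables (R : realType) (T : Type) (w : T -> T -> R) (s : T -> T -> R)
  (ori : T -> T -> Prop) (n : T -> T -> nat).
Hypothesis hs : forall x y, edge w x y -> 0 < s x y.
Hypothesis hwsym : forall x y, w x y = w y x.
Hypothesis hsym : forall x y, edge w x y -> s x y = s y x.
Hypothesis hori : forall x y, ori x y -> edge w x y.
Hypothesis hori_iff : forall x y, edge w x y -> (ori x y <-> ~ ori y x).
Hypothesis hn2 : forall x y, edge w x y -> (2 <= n x y)%N.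
Hypothesis hconn : forall x y, exists p, is_walk (edge w) x p /\ last x p = y.

Local Notation V := (modV ori n).
Local Notation W := (mod_w w ori n).
Local Notation S := (mod_sigma s ori n).
Local Notation d := (path_dist w s).

Lemma s_ge0 u v : edge w u v -> 0 <= s u v.
Proof. by move=> /hs /ltW. Qed.

Definition phi x0 (u : V) : R :=
  match u with
  | inl a => d x0 a
  | inr t => let '(x, y, i) := sval t in
      Num.min (d x0 x + i%:R * (s x y / (n x y)%:R))
              (d x0 y + ((n x y)%:R - i%:R) * (s x y / (n x y)%:R))
  end.

Lemma h_ge0 x y : ori x y -> 0 <= s x y / (n x y)%:R.
Proof. by move=> /hori e; apply: divr_ge0; [exact: s_ge0|exact: ler0n]. Qed.

Lemma edge_sym x y : edge w x y -> edge w y x.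
Proof. by rewrite /edge hwsym. Qed.

Lemma hN x y : ori x y -> (n x y)%:R * (s x y / (n x y)%:R) = s x y.
Proof.
move=> /hori e; rewrite mulrCA mulfV ?mulr1 // pnatr_eq0.
by have := hn2 e; case: (n x y).
Qed.

Lemma tri x0 y z : edge w y z -> d x0 z <= d x0 y + s y z.
Proof. by move=> e; apply: pd_tri => //; exact: s_ge0. Qed.

Lemma phi_lip x0 u v : edge W u v -> phi x0 v <= phi x0 u + S u v.
Proof.
case: u => [a|[[[x y] i] [ho hi]]]; case: v => [b|[[[x' y'] j] [ho' hj]]];
  rewrite /edge /mod_w /mod_sigma /mod_edgefun /phi /=; simpl in *.
- by rewrite ltxx.
- case: asboolP => [c|_]; last by rewrite ltxx.
  move=> _; have h0 := h_ge0 ho'.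
  case: c => -[-> ->]; rewrite ge_min; apply/orP; [left|right]; first lra.
  have e : (n x' y').-1.+1 = n x' y' by rewrite prednK //; lia.
  rewrite -[X in X%:R - _]e -natr1; lra.
- case: asboolP => [c|_]; last by rewrite ltxx.
  move=> _; have h0 := h_ge0 ho; have e1 := tri x0 (hori ho).
  have e2 := tri x0 (edge_sym (hori ho)); rewrite -(hsym (hori ho)) in e2.
  have hN := hN ho.
  set h := s x y / _ in h0 hN *; set N := (n x y)%:R in hN *.
  have e' : (n x y).-1.+1 = n x y by rewrite prednK //; have := hn2 (hori ho); lia.
  have e : ((n x y).-1)%:R = N - 1 :> R by rewrite /N -[in RHS]e' -natr1 addrK.
  rewrite -lerBlDr le_min; case: c => -[-> ->]; apply/andP; split; rewrite ?e; lra.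
- case: asboolP => [[ex [ey c]]|_]; last by rewrite ltxx.
  move=> _; subst x' y'; have h0 := h_ge0 ho.
  set h := s x y / _ in h0 *; set N := (n x y)%:R.
  rewrite -lerBlDr le_min; apply/andP; split; rewrite lerBlDr ge_min;
    apply/orP; [left|right]; case: c => ->; rewrite -?natr1; lra.
Qed.


Lemma Wpos x y : ori x y -> 0 < (n x y)%:R * w x y.
Proof.
move=> H; have e := hori H; apply: mulr_gt0; last exact: e.
by rewrite ltr0n; have := hn2 e; lia.
Qed.

Definition cf a b (H : ori a b) (k : nat) : V :=
  match pselect (0 < k < n a b)%N with
  | left P => inr (exist _ (a, b, k) (conj H P))
  | right _ => if k == 0%N then inl a else inl b
  end.

Lemma cf_step a b (H : ori a b) k : (k < n a b)%N ->
  edge W (cf H k) (cf H k.+1) /\ S (cf H k) (cf H k.+1) = s a b / (n a b)%:R.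
Proof.
move=> hk; have n2 := hn2 (hori H); have wp := Wpos H.
rewrite /cf /edge /mod_w /mod_sigma /mod_edgefun.
case: (pselect (0 < k < n a b)%N) => Pk; case: (pselect (0 < k.+1 < n a b)%N) => Pk1 /=.
- by asbT ltac:(split=>//; split=>//; by left); split.
- by asbT ltac:(right; split => //; move: Pk1; lia); split.
- have k0 : k = 0%N by move: Pk; lia.
  by subst k => /=; asbT ltac:(left; split => //); split.
- exfalso; move: Pk; move: Pk1; lia.
Qed.


Definition cb a b (H : ori b a) (k : nat) : V :=
  match pselect (0 < n b a - k < n b a)%N with
  | left P => inr (exist _ (b, a, (n b a - k)%N) (conj H P))
  | right _ => if k == 0%N then inl a else inl b
  end.

Lemma cb_step a b (H : ori b a) k : (k < n b a)%N ->
  edge W (cb H k) (cb H k.+1) /\ S (cb H k) (cb H k.+1) = s b a / (n b a)%:R.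
Proof.
move=> hk; have n2 := hn2 (hori H); have wp := Wpos H.
rewrite /cb /edge /mod_w /mod_sigma /mod_edgefun.
case: (pselect (0 < n b a - k < n b a)%N) => Pk;
  case: (pselect (0 < n b a - k.+1 < n b a)%N) => Pk1 /=.
- by asbT ltac:(split=>//; split=>//; right; lia); split.
- by asbT ltac:(left; split => //; move: Pk1; lia); split.
- have k0 : k = 0%N by move: Pk; lia.
  subst k => /=; by asbT ltac:(right; split => //; lia); split.
- exfalso; move: Pk; move: Pk1; lia.
Qed.

Lemma cf0 a b (H : ori a b) : cf H 0 = inl a.
Proof. by rewrite /cf; case: pselect. Qed.
Lemma cfN a b (H : ori a b) : cf H (n a b) = inl b.
Proof. rewrite /cf; case: pselect => [P|_]; first by exfalso; move: P; lia.
by have := hn2 (hori H); case: (n a b). Qed.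
Lemma cb0 a b (H : ori b a) : cb H 0 = inl a.
Proof. by rewrite /cb; case: pselect => // P; exfalso; move: P; lia. Qed.
Lemma cbN a b (H : ori b a) : cb H (n b a) = inl b.
Proof. rewrite /cb; case: pselect => [P|_]; first by exfalso; move: P; lia.
by have := hn2 (hori H); case: (n b a). Qed.

Lemma seg a b : edge w a b -> exists q,
  [/\ is_walk (edge W) (inl a) q, last (inl a) q = inl b & walk_len S (inl a) q = s a b].
Proof.
move=> e; have [H|H] : ori a b \/ ori b a.
  by case: (pselect (ori b a)) => h; [right|left; exact: (proj2 (hori_iff e))].
- have [] := @chain_walk R V (edge W) S (cf H) (s a b / (n a b)%:R) (n a b) 0
    (fun k hk => cf_step H (k := k) ltac:(by move: hk; rewrite add0n => /andP[])).
  rewrite cf0 add0n cfN hN // => h1 h2 h3; by exists (map (cf H) (iota 1 (n a b))).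
- have [] := @chain_walk R V (edge W) S (cb H) (s b a / (n b a)%:R) (n b a) 0
    (fun k hk => cb_step H (k := k) ltac:(by move: hk; rewrite add0n => /andP[])).
  rewrite cb0 add0n cbN hN // -hsym // => h1 h2 h3.
  by exists (map (cb H) (iota 1 (n b a))).
Qed.

Lemma lift_walk x p : is_walk (edge w) x p -> exists q,
  [/\ is_walk (edge W) (inl x) q, last (inl x) q = inl (last x p) &
      walk_len S (inl x) q = walk_len s x p].
Proof.
elim: p x => [|y p IH] x /=; first by exists [::].
move=> [e hp]; have [q1 [a1 a2 a3]] := seg e; have [q2 [b1 b2 b3]] := IH _ hp.
exists (q1 ++ q2); rewrite walk_len_cat last_cat a2 a3 b3; split=> //.
by apply/is_walk_cat; rewrite a2.
Qed.

Lemma reach x0 u : exists q, is_walk (edge W) (inl x0) q /\ last (inl x0) q = u.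
Proof.
have reachl a : exists q, is_walk (edge W) (inl x0) q /\ last (inl x0) q = inl a.
  have [p [hp hl]] := hconn x0 a; have [q [q1 q2 _]] := lift_walk hp.
  by exists q; rewrite q2 hl.
case: u => [a|t]; first exact: reachl.
case: t => [[[x y] i] [H hi]] /=; simpl in H, hi.
have [q1 [a1 a2]] := reachl x.
have [] := @chain_walk R V (edge W) S (cf H) (s x y / (n x y)%:R) i 0
    (fun k hk => cf_step H (k := k) ltac:(move: hk hi; rewrite add0n; lia)).
rewrite cf0 add0n => b1 b2 _; exists (q1 ++ map (cf H) (iota 1 i)).
rewrite last_cat a2 b2; split; first by apply/is_walk_cat; rewrite a2.
rewrite /cf; case: pselect => [P|]; last by move: hi.
by congr inr; congr exist; exact: Prop_irrelevance.
Qed.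

Lemma S_ge0 u v : 0 <= S u v.
Proof.
case: u => [a|[[[x y] i] [H hi]]]; case: v => [b|[[[x' y'] j] [H' hj]]];
  rewrite /mod_sigma /mod_edgefun /=; simpl in *; try by [].
- by case: asboolP => // _; exact: h_ge0.
- by case: asboolP => // _; exact: h_ge0.
- by case: asboolP => // _; exact: h_ge0.
Qed.

Local Notation D := (path_dist W S).

Lemma phi_le x0 u : phi x0 u <= D (inl x0) u.
Proof.
apply: pd_ge; first exact: reach.
move=> q hq hl; have := @potential R V _ _ (phi x0) (@phi_lip x0) _ _ hq.
by rewrite hl /= pd_refl ?add0r //; exact: s_ge0.
Qed.

Lemma D_ll x y : D (inl x) (inl y) = d x y.
Proof.
apply/eqP; rewrite eq_le; apply/andP; split; last exact: (phi_le x (inl y)).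
apply: pd_ge; first exact: hconn.
move=> p hp hl; have [q [q1 q2 q3]] := lift_walk hp.
by rewrite -q3; apply: pd_le => //; [move=> *; exact: S_ge0| rewrite q2 hl].
Qed.

Variable mu : T -> R.
Local Notation M := (mod_mu w mu s ori n).
Local Notation NV := (newV ori n).
Let g (t : NV) : \bar R := (M (inr t))%:E.

Lemma g_ge0 t : (0 <= g t)%E.
Proof.
case: t => [[[x y] i] [H hi]]; rewrite /g /= lee_fin.
apply: divr_ge0; last exact: ler0n.
apply: mulr_ge0; last exact: sqr_ge0.
by apply: mulr_ge0 => //; exact: ltW (hori H).
Qed.

Lemma esum_edge a b (H : ori a b) :
  (esum (T := {classic NV}) [set t | (sval t).1 = (a, b)] g <=
   (2 * w a b * s a b ^+ 2)%:E)%E.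
Proof.
set c := 2 * w a b * s a b ^+ 2 / (n a b)%:R.
have c0 : 0 <= c.
  apply: divr_ge0; last exact: ler0n.
  apply: mulr_ge0; last exact: sqr_ge0.
  by apply: mulr_ge0 => //; exact: ltW (hori H).
have bij : set_bij (aT:={classic NV}) [set t | (sval t).1 = (a, b)]
    [set i | (0 < i < n a b)%N] (fun t => (sval t).2).
  split.
  - by move=> [[[x y] i] [H' hi]] /= [ex ey]; move: hi; rewrite /= ex ey.
  - move=> [[[x y] i] h1] [[[x' y'] j] h2]; rewrite !inE /= => -[ex ey] [ex' ey'] ej.
    subst; by congr exist; exact: Prop_irrelevance.
  - by move=> i /= hi; exists (exist _ (a, b, i) (conj H hi)).
have e := reindex_esum _ _ _ (fun _ : nat => c%:E) bij; rewrite /= in e.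
rewrite (eq_esum (b := fun _ => c%:E)); last first.
  by move=> [[[x y] i] hh] /= [-> ->].
rewrite -e.
apply: le_trans (@esum_sub R nat _ [set i | (i < n a b)%N] _ _ _) _.
- by move=> i /= /andP[].
- by move=> *; rewrite lee_fin.
rewrite esum_const_lt // lee_fin /c.
rewrite mulrCA mulfV ?mulr1 // pnatr_eq0; have := hn2 (hori H); lia.
Qed.

Hypothesis hmu : forall x, 0 < mu x.
Hypothesis hada : forall x, (((mu x)^-1)%:E *
  esum (T := {classic T}) [set y | edge w x y] (fun y => (w x y * s x y ^+ 2)%:E) <= 1)%E.

Lemma esum_adj x :
  (esum (T := {classic T}) [set y | edge w x y] (fun y => (w x y * s x y ^+ 2)%:E)
    <= (mu x)%:E)%E.
Proof. by have := hada x; rewrite lee_pdivrMl // mule1. Qed.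

Lemma esum_vertex a :
  (esum (T := {classic NV}) [set t | (sval t).1.1 = a \/ (sval t).1.2 = a] g <=
   (mu a + mu a)%:E)%E.
Proof.
set J := fun y : {classic T} => [set t : {classic NV} | (sval t).1 = (a, y) \/ (sval t).1 = (y, a)].
have bij : set_bij (aT := ({classic T} * {classic NV})%type)
   ([set y : {classic T} | edge w a y] `*`` J)
   [set t : {classic NV} | (sval t).1.1 = a \/ (sval t).1.2 = a] snd.
  split.
  - move=> [y [[[x' y'] i] hh]] /= [_ []] [-> ->]; by [left|right].
  - move=> [y1 t1] [y2 t2]; rewrite !inE /= => -[_ h1] [_ h2] et; subst t2.
    congr pair; move: h1 h2; case: t1 => [[[x' y'] i] hh] /=.
    by case=> -[? ?]; case=> -[? ?]; subst.
  - move=> [[[x' y'] i] [H hi]] /= [ex|ey].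
    + subst; exists (y', exist _ (a, y', i) (conj H hi)) => //; split => /=.
        exact: hori H.
      by left.
    + subst; exists (x', exist _ (x', a, i) (conj H hi)) => //; split => /=.
        exact: edge_sym (hori H).
      by right.
have e := @reindex_esum R _ {classic NV} _ _ snd g bij; rewrite /= in e; rewrite e {e}.
rewrite -(esum_esum (a := fun (_ : {classic T}) (t : {classic NV}) => g t)) /=; last by move=> *; exact: g_ge0.
have step : forall y : {classic T}, edge w a y ->
    (esum (J y) g <= (w a y * s a y ^+ 2)%:E + (w a y * s a y ^+ 2)%:E)%E.
  move=> y ay; rewrite -EFinD -mulr2n -mulr_natl mulrA.
  have [H|H] : ori a y \/ ori y a.
    by case: (pselect (ori y a)) => h; [right|left; exact: (proj2 (hori_iff ay))].
  - apply: le_trans (esum_edge H); apply: esum_sub; last by move=> *; exact: g_ge0.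
    move=> [[[x' y'] i] [H' hi]] /= [//|] [ex ey]; rewrite /= ex ey in H'.
    by exfalso; exact: (proj1 (hori_iff (hori H))) H H'.
  - have -> : 2 * w a y * s a y ^+ 2 = 2 * w y a * s y a ^+ 2.
      by rewrite (hwsym a y) (hsym ay).
    apply: le_trans (esum_edge H); apply: esum_sub; last by move=> *; exact: g_ge0.
    move=> [[[x' y'] i] [H' hi]] /= [[ex ey]|//]; rewrite /= ex ey in H'.
    by exfalso; exact: (proj1 (hori_iff (hori H))) H H'.
apply: le_trans (le_esum step) _.
rewrite esumD; last 2 first.
  by move=> y /= ay; rewrite lee_fin; apply: mulr_ge0; [exact: ltW|exact: sqr_ge0].
  by move=> y /= ay; rewrite lee_fin; apply: mulr_ge0; [exact: ltW|exact: sqr_ge0].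
by rewrite EFinD; apply: leeD; exact: esum_adj.
Qed.

Lemma M_ge0 u : 0 <= M u.
Proof. by case: u => [a|t]; [exact: ltW (hmu a)|have := g_ge0 t; rewrite lee_fin]. Qed.

Variables (x0 : T) (r : R).
Let B := ball_d d x0 r.
Let Bs := ball_d D (inl x0) r.
Let Nn := [set t : {classic NV} | Bs (inr t)].
Let ch (t : NV) := if d x0 (sval t).1.1 <= r then (sval t).1.1 else (sval t).1.2.

Lemma new_in_ball t : Bs (inr t) -> B (ch t).
Proof.
rewrite /Bs /B /ball_d /ch /= => hb; have := le_trans (phi_le x0 (inr t)) hb.
case: t {hb} => [[[x y] i] [H hi]] /=; simpl in *.
have h0 := h_ge0 H; set h := s x y / _ in h0 *.
have iN : (i%:R : R) <= (n x y)%:R by rewrite ler_nat; move: hi; lia.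
have i0 : (0 : R) <= i%:R by exact: ler0n.
move=> hm; case: ifP => hx //; move: hm; rewrite ge_min => /orP[] hh.
- have : 0 <= i%:R * h by exact: mulr_ge0.
  move/negbT: hx; rewrite -ltNge => hx; lra.
- have : 0 <= ((n x y)%:R - i%:R) * h by apply: mulr_ge0 => //; lra.
  lra.
Qed.
Lemma esum_new : (esum Nn g <= vmeas mu B + vmeas mu B)%E.
Proof.
set C := fun a : {classic T} => [set t : {classic NV} | Nn t /\ ch t = a].
have bij : set_bij (aT := ({classic T} * {classic NV})%type) (B `*`` C) Nn snd.
  split.
  - by move=> [a t] [_ [? _]].
  - move=> [a1 t1] [a2 t2]; rewrite !inE /= => -[_ [_ h1]] [_ [_ h2]] et; subst t2.
    by rewrite -h1 -h2.
  - move=> t ht; exists (ch t, t) => //; split => //=; exact: new_in_ball.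
have e := @reindex_esum R _ {classic NV} _ _ snd g bij; rewrite /= in e; rewrite e {e}.
rewrite -(esum_esum (a := fun (_ : {classic T}) (t : {classic NV}) => g t)) /=; last by move=> *; exact: g_ge0.
have step : forall a : {classic T}, B a -> (esum (C a) g <= (mu a)%:E + (mu a)%:E)%E.
  move=> a _; rewrite -EFinD; apply: le_trans (esum_vertex a).
  apply: esum_sub; last by move=> *; exact: g_ge0.
  move=> [[[x y] i] hh] /= [_]; rewrite /ch /=; case: ifP => _ ->; by [left|right].
apply: le_trans (le_esum step) _.
rewrite esumD //; by move=> *; rewrite lee_fin; exact: ltW.
Qed.

Lemma lower : (vmeas mu B <= vmeas M Bs)%E.
Proof.
rewrite /vmeas.
have e := @esum_image R {classic T} {classic V} B inl (fun u => (M u)%:E)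
  ltac:(by move=> a b _ _ []).
rewrite /= in e; rewrite -e; apply: esum_sub; last by move=> *; rewrite lee_fin M_ge0.
by move=> _ [a ha <-]; rewrite /Bs /ball_d /= D_ll.
Qed.

Lemma upper : (vmeas M Bs <= 3%:E * vmeas mu B)%E.
Proof.
rewrite /vmeas (@esumID R {classic V} (range inl)); last by move=> *; rewrite lee_fin M_ge0.
have e1 := @esum_image R {classic T} {classic V} B inl (fun u => (M u)%:E)
  ltac:(by move=> a b _ _ []).
have e2 := @esum_image R {classic NV} {classic V} Nn inr (fun u => (M u)%:E)
  ltac:(by move=> a b _ _ []).
rewrite /= in e1 e2.
have h1 : (esum (T:={classic V}) (Bs `&` range inl) (fun u => (M u)%:E) <= vmeas mu B)%E.
  rewrite /vmeas -e1; apply: esum_sub; last by move=> *; rewrite lee_fin M_ge0.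
  move=> u [hb [a _ ea]]; rewrite -ea in hb *; exists a => //.
  by move: hb; rewrite /Bs /ball_d /= D_ll.
have h2 : (esum (T:={classic V}) (Bs `&` ~` range inl) (fun u => (M u)%:E) <= vmeas mu B + vmeas mu B)%E.
  apply: (le_trans _ esum_new).
  rewrite [X in (_ <= X)%E](_ : _ = esum (T:={classic V}) (inr @` Nn) (fun u => (M u)%:E)); last by rewrite e2.
  apply: esum_sub; last by move=> *; rewrite lee_fin M_ge0.
  move=> [a|t] [hb hn]; first by exfalso; apply: hn; exists a.
  by exists t.
have v0 : (0 <= vmeas mu B)%E by apply: esum_ge0 => *; rewrite lee_fin; exact: ltW.
have -> : (3%:E * vmeas mu B = vmeas mu B + vmeas mu B + vmeas mu B)%E.
  move: v0; case: (vmeas mu B) => [x||] //= _.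
    by rewrite -!EFinD -EFinM; congr EFin; lra.
  by rewrite gt0_muley // lte_fin.
by rewrite -addeA; apply: leeD.
Qed.
End Mod.

Unset Implicit Arguments.

Theorem lemma3p1 (R : realType) (T : Type) (w : T -> T -> R) (mu : T -> R)
    (s : T -> T -> R) (ori : T -> T -> Prop) (n : T -> T -> nat) :
  weighted_graph w mu ->
  adapted w mu s ->
  orientation w ori ->
  (forall x y, edge w x y -> n x y = n y x) ->
  (forall x y, edge w x y -> (2 <= n x y)%N) ->
  (forall x y : T,
     path_dist (mod_w w ori n) (mod_sigma s ori n) (inl x) (inl y) = path_dist w s x y) /\
  (forall (x0 : T) (r : R), 0 < r ->
     (vmeas mu (ball_d (path_dist w s) x0 r)
      <= vmeas (mod_mu w mu s ori n) (ball_d (path_dist (mod_w w ori n) (mod_sigma s ori n)) (inl x0) r)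
      <= 3%:E * vmeas mu (ball_d (path_dist w s) x0 r))%E).
Proof.
Proof.
move=> [_ [w0 wsym] [_ hmu] _ hconn] [hs1 hsym hada] [hori hori_iff] _ hn2.
have hs : forall x y, edge w x y -> 0 < s x y by move=> x y /hs1 /andP[].
split.
  exact: (D_ll hs wsym hsym hori hori_iff hn2 hconn).
move=> x0 r _; apply/andP; split.
  exact: (lower hs wsym hsym hori hori_iff hn2 hconn hmu).
exact: (upper hs wsym hsym hori hori_iff hn2 hconn hmu hada).
Qed.
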